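(* Let $0<\alpha<1$ and let $g_\alpha$ be the generalized conical spacetime metric on $\mathbb{R}^4$ (described in the context), $S=\{0\}\times\mathbb{R}^3$, and $e$ the Euclidean metric on $\mathbb{R}^4$. Suppose the generalized curve $\gamma\in\mathcal{G}[\mathbb{R},\mathbb{R}^4]$ satisfies $e(\dot\gamma,\dot\gamma)=1$ in $\mathcal{G}(\mathbb{R})$ and $g_\alpha(\dot\gamma,\dot\gamma)$ is uniformly strictly negative, i.e., for any representatives $(\gamma_\varepsilon)_{\varepsilon\in(0,1]}$ of $\gamma$ and $(g_\alpha^\varepsilon)_{\varepsilon\in(0,1]}$ of $g_\alpha$ there exist $q\in[0,\infty)$ and $\varepsilon_0\in(0,1]$ such that $$g_\alpha^\varepsilon(\gamma_\varepsilon(s))(\dot\gamma_\varepsilon(s),\dot\gamma_\varepsilon(s))\le -\varepsilon^q\qquad(s\in\mathbb{R},\ 0<\varepsilon<\varepsilon_0).$$ Then there is a unique $\tilde s\in(\widetilde{\mathbb{R}})_c$ such that $\gamma(\tilde s)\in\widetilde S_c$.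
   Context: Generalized conical spacetime: with coordinates $(t,x,y,z)$, $g_\alpha$ is the Colombeau generalized Lorentz metric represented by $g_\alpha^\varepsilon=-dt^2+\rho^\varepsilon$, $\rho^\varepsilon = (\frac{1+\alpha^2}{2}+\frac{1-\alpha^2}{2}f_1^\varepsilon)dx^2 + (\frac{1+\alpha^2}{2}-\frac{1-\alpha^2}{2}f_1^\varepsilon)dy^2 + (1-\alpha^2)f_2^\varepsilon\,dx\,dy + dz^2$, where $f_j^\varepsilon = f_j*\psi_\varepsilon$ are mollifications of $f_1=\frac{x^2-y^2}{x^2+y^2}$, $f_2=\frac{2xy}{x^2+y^2}$ by a real-valued delta net, chosen such that there is $\beta>0$ with $\rho^\varepsilon(x,y,z)(v,v)\ge\beta(v_1^2+v_2^2)+v_3^2$ for all points, all $v\in\mathbb{R}^3$ and all $\varepsilon\in(0,1]$ (e.g. $\psi_\varepsilon(x,y)=\varepsilon^{-2}\varphi(x/\varepsilon,y/\varepsilon)$ with $\varphi\in\mathcal S(\mathbb{R}^2)$ real, $\int\varphi=1$, and either $\varphi\ge0$ or $\alpha^2>(\|\varphi\|_{L^1}-1)/(\|\varphi\|_{L^1}+1)$). Colombeau notions (special algebra): $\mathcal{G}(\mathbb{R})$ is the quotient of moderate nets of smooth functions (each derivative $O(\varepsilon^{-N})$ uniformly on compacts) by negligible nets (each derivative $O(\varepsilon^m)$ for all $m$ uniformly on compacts). $\mathcal{G}[\mathbb{R},\mathbb{R}^4]$ is the space of c-bounded generalized maps: classes of moderate nets $(\gamma_\varepsilon)$ of smooth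 maps $\mathbb{R}\to\mathbb{R}^4$ such that every compact $K\subset\mathbb{R}$ has a compact $K'\subset\mathbb{R}^4$ with $\gamma_\varepsilon(K)\subset K'$ for small $\varepsilon$, modulo negligible nets. $(\widetilde{\mathbb{R}})_c$ is the set of compactly supported generalized points: nets $(s_\varepsilon)$ of reals bounded for small $\varepsilon$, modulo $|s_\varepsilon-t_\varepsilon|=O(\varepsilon^m)$ for all $m$; $\widetilde S_c$ is defined analogously with nets of points in $S$. The generalized point value $\gamma(\tilde s)$ is the class of $(\gamma_\varepsilon(s_\varepsilon))$. *)

(* Defs.v *)
From HB Require Import structures.
From mathcomp Require Import all_boot all_order all_algebra.
From mathcomp Require Import all_classical all_reals all_analysis.
Set Implicit Arguments. Unset Strict Implicit. Unset Printing Implicit Defensive.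
Import Order.TTheory GRing.Theory Num.Theory.
Import numFieldNormedType.Exports.
Local Open Scope classical_set_scope.
Local Open Scope ring_scope.

Section Defs.
Variable R : realType.

Definition for_small_eps (P : R -> Prop) : Prop :=
  exists e0 : R, 0 < e0 <= 1 /\ forall eps, 0 < eps < e0 -> P eps.

Definition smooth_fun (f : R -> R) : Prop :=
  forall (k : nat) (s : R), derivable (derive1n k f) s 1.

(* moderate / negligible nets of smooth functions R -> R (special algebra G(R));
   compact subsets of R are exhausted by the intervals [a,b]. *)
Definition moderate_net (u : R -> R -> R) : Prop :=
  forall (k : nat) (a b : R), exists (N : nat) (C : R),
    for_small_eps (fun eps => forall s, a <= s <= b ->
      `|derive1n k (u eps) s| <= C * eps ^- N).

Definition negligible_net (u : R -> R -> R) : Prop :=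
  forall (k : nat) (a b : R) (m : nat), exists C : R,
    for_small_eps (fun eps => forall s, a <= s <= b ->
      `|derive1n k (u eps) s| <= C * eps ^+ m).

Definition ct : 'I_4 := @Ordinal 4 0 isT.
Definition cx : 'I_4 := @Ordinal 4 1 isT.
Definition cy : 'I_4 := @Ordinal 4 2 isT.
Definition cz : 'I_4 := @Ordinal 4 3 isT.

(* a representative (gamma_eps) of an element of G[R,R^4] (c-bounded generalized map) *)
Definition c_bounded_curve_rep (gam : R -> R -> 'I_4 -> R) : Prop :=
  (forall eps, 0 < eps <= 1 -> forall i, smooth_fun (fun s => gam eps s i)) /\
  (forall i, moderate_net (fun eps s => gam eps s i)) /\
  (forall a b : R, exists C : R,
     for_small_eps (fun eps => forall s i, a <= s <= b -> `|gam eps s i| <= C)).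

Definition vel (gam : R -> R -> 'I_4 -> R) (eps s : R) (i : 'I_4) : R :=
  derive1 (fun r => gam eps r i) s.

Definition eucl_unit_speed (gam : R -> R -> 'I_4 -> R) : Prop :=
  negligible_net (fun eps s => (\sum_(i < 4) (vel gam eps s i) ^+ 2) - 1).

(* the functions f1, f2 on R^2 (value at the origin irrelevant: 0/0 = 0 here) *)
Definition f1 (x y : R) : R := (x ^+ 2 - y ^+ 2) / (x ^+ 2 + y ^+ 2).
Definition f2 (x y : R) : R := (2 * x * y) / (x ^+ 2 + y ^+ 2).

Definition leb2 := ((@lebesgue_measure R) \x (@lebesgue_measure R))%E.

Definition mollify (psi : R -> R -> R -> R) (f : R -> R -> R) (eps x y : R) : R :=
  Rintegral leb2 setT (fun p : R * R => f (x - p.1) (y - p.2) * psi eps p.1 p.2).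

Definition delta_net (psi : R -> R -> R -> R) : Prop :=
  (forall eps, 0 < eps <= 1 ->
     leb2.-integrable setT (fun p : R * R => (psi eps p.1 p.2)%:E) /\
     Rintegral leb2 setT (fun p : R * R => psi eps p.1 p.2) = 1) /\
  (exists C : R, forall eps, 0 < eps <= 1 ->
     Rintegral leb2 setT (fun p : R * R => `|psi eps p.1 p.2|) <= C) /\
  (forall r eta : R, 0 < r -> 0 < eta ->
     for_small_eps (fun eps =>
       Rintegral leb2 [set p : R * R | r ^+ 2 < p.1 ^+ 2 + p.2 ^+ 2]
         (fun p => `|psi eps p.1 p.2|) <= eta)).

Definition rho (alpha : R) (psi : R -> R -> R -> R) (eps x y z v1 v2 v3 : R) : R :=
  ((1 + alpha ^+ 2) / 2 + (1 - alpha ^+ 2) / 2 * mollify psi f1 eps x y) * v1 ^+ 2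
  + ((1 + alpha ^+ 2) / 2 - (1 - alpha ^+ 2) / 2 * mollify psi f1 eps x y) * v2 ^+ 2
  + (1 - alpha ^+ 2) * mollify psi f2 eps x y * v1 * v2
  + v3 ^+ 2.

Definition g_alpha (alpha : R) (psi : R -> R -> R -> R) (eps : R) (p v : 'I_4 -> R) : R :=
  - (v ct) ^+ 2 + rho alpha psi eps (p cx) (p cy) (p cz) (v cx) (v cy) (v cz).

Definition cpt_gen_num (s : R -> R) : Prop :=
  exists C : R, for_small_eps (fun eps => `|s eps| <= C).

Definition gen_num_eq (s s' : R -> R) : Prop :=
  forall m : nat, exists C : R,
    for_small_eps (fun eps => `|s eps - s' eps| <= C * eps ^+ m).

Definition in_S_tilde_c (P : R -> 'I_4 -> R) : Prop :=
  exists p : R -> 'I_4 -> R,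
    (forall eps, 0 < eps <= 1 -> p eps ct = 0) /\
    (exists C : R, for_small_eps (fun eps => forall i, `|p eps i| <= C)) /\
    (forall i, gen_num_eq (fun eps => P eps i) (fun eps => p eps i)).

End Defs.

(* Main.v *)
Require Import Defs.
From HB Require Import structures.
From mathcomp Require Import all_boot all_order all_algebra.
From mathcomp Require Import all_classical all_reals all_analysis.
From mathcomp Require Import ring lra.
Import Order.TTheory GRing.Theory Num.Theory.
Import numFieldNormedType.Exports.
Local Open Scope classical_set_scope.
Local Open Scope ring_scope.

Section Helpers.
Variable R : realType.

Lemma fse_and (P Q : R -> Prop) :
  for_small_eps P -> for_small_eps Q -> for_small_eps (fun e => P e /\ Q e).
Proof.
move=> [e1 [/andP[e10 e11] h1]] [e2 [/andP[e20 e21] h2]].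
exists (Num.min e1 e2); split.
  by rewrite lt_min e10 e20 /= ge_min e11.
move=> e /andP[e0]; rewrite lt_min => /andP[l1 l2]; split.
  by apply: h1; rewrite e0 l1.
by apply: h2; rewrite e0 l2.
Qed.

Lemma fse_mono (P Q : R -> Prop) :
  (forall e, 0 < e <= 1 -> P e -> Q e) -> for_small_eps P -> for_small_eps Q.
Proof.
move=> hPQ [e1 [/andP[e10 e11] h1]]; exists e1; split; first by rewrite e10.
move=> e /andP[e0 ee]; apply: hPQ; last by apply: h1; rewrite e0.
by rewrite e0 /=; apply: ltW; apply: lt_le_trans ee e11.
Qed.

Lemma fse_le (d : R) : 0 < d -> for_small_eps (fun e => e <= d).
Proof.
move=> d0; exists (Num.min d 1); split; first by rewrite lt_min d0 ltr01 ge_min lexx orbT.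
move=> e /andP[_]; rewrite lt_min => /andP[h _]; exact: ltW.
Qed.

Lemma mvt_f (f : R -> R) x y : (forall s, derivable f s 1) -> x < y ->
  exists2 z, x < z < y & f y - f x = derive1 f z * (y - x).
Proof.
move=> df xy.
have h1 : forall z, z \in `]x, y[ -> is_derive z 1 f (derive1 f z).
  move=> z _; rewrite derive1E; apply: derivableP; exact: df.
have h2 : {within `[x, y], continuous f}.
  by apply: derivable_within_continuous => z _; exact: df.
have [z zin ->] := @MVT R f (derive1 f) x y xy h1 h2.
by exists z => //; move: zin; rewrite in_itv.
Qed.

Lemma ivt0 (f : R -> R) a b : (forall s, derivable f s 1) -> a <= b ->
  f a * f b <= 0 -> exists2 z, a <= z <= b & f z = 0.
Proof.
move=> df ab h.
have h2 : {within `[a, b], continuous f}.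
  by apply: derivable_within_continuous => z _; exact: df.
have h3 : Num.min (f a) (f b) <= 0 <= Num.max (f a) (f b).
  rewrite ge_min le_max.
  case: (leP (f a) 0) => ha.
    case: (leP 0 (f a)) => ha'; first by [].
    have hb : 0 <= f b by nra.
    by rewrite hb !orbT.
  have hb : f b <= 0 by nra.
  by rewrite hb (ltW ha) !orbT.
have [z zin fz] := @IVT R f a b 0 ab h2 h3.
by exists z => //; move: zin; rewrite in_itv.
Qed.

Lemma sign_f (f : R -> R) a b c : (forall s, derivable (derive1 f) s 1) ->
  0 < c -> (forall x, a <= x <= b -> c <= derive1 f x ^+ 2) ->
  forall x y, a <= x <= b -> a <= y <= b -> 0 < derive1 f x * derive1 f y.
Proof.
move=> ddf c0 hc x y hx hy; rewrite ltNge; apply/negP => H.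
wlog xy : x y hx hy H / x <= y.
  move=> W; case: (leP x y) => xy; first exact: (W x y).
  by apply: (W y x) => //; [rewrite mulrC | apply: ltW].
have [z /andP[z1 z2] z0] := @ivt0 (derive1 f) x y ddf xy H.
have := hc z; rewrite z0 exprS mul0r => /(_ _) h.
have : c <= 0 by apply: h; move: hx hy => /andP[? ?] /andP[? ?]; apply/andP; split; lra.
lra.
Qed.

Lemma abs_lb (c x : R) : 0 < c <= 1 -> c <= x ^+ 2 -> c <= `|x|.
Proof.
move=> /andP[c0 c1] h; case: (leP 0 x) => hx.
  rewrite ger0_norm //; case: (leP 1 x) => h1; first lra.
  have : x ^+ 2 <= x.
    by rewrite expr2 -subr_ge0 -{1}[x]mulr1 -mulrBr; apply: mulr_ge0; lra.
  lra.
rewrite ler0_norm; last exact: ltW.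
case: (leP 1 (- x)) => h1; first lra.
have : x ^+ 2 <= - x.
  rewrite -sqrrN expr2 -subr_ge0 -{1}[-x]mulr1 -mulrBr; apply: mulr_ge0; lra.
lra.
Qed.

Lemma dist_f (f : R -> R) a b c x y : (forall s, derivable f s 1) ->
  0 <= c -> (forall z, a <= z <= b -> c <= `|derive1 f z|) ->
  a <= x <= b -> a <= y <= b -> c * `|x - y| <= `|f x - f y|.
Proof.
move=> df c0 hc /andP[x1 x2] /andP[y1 y2].
case: (ltgtP x y) => [xy|yx|->]; last by rewrite !subrr normr0 mulr0.
- have [z /andP[z1 z2] e] := @mvt_f f _ _ df xy.
  rewrite distrC [`|f x - f y|]distrC e normrM ler_wpM2r //.
  by apply: hc; apply/andP; split; lra.
- have [z /andP[z1 z2] e] := @mvt_f f _ _ df yx.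
  rewrite e normrM ler_wpM2r //.
  by apply: hc; apply/andP; split; lra.
Qed.

Lemma sum4 (F : 'I_4 -> R) : \sum_(i < 4) F i = F ct + F cx + F cy + F cz.
Proof.
rewrite !big_ord_recl big_ord0 addr0 !addrA.
by do ![congr (_ + _)]; congr F; apply/val_inj.
Qed.

Lemma key_ineq (b vt vx vy vz : R) : 0 < b ->
  b * (vx ^+ 2 + vy ^+ 2) + vz ^+ 2 <= vt ^+ 2 ->
  1 / 2 <= vt ^+ 2 + vx ^+ 2 + vy ^+ 2 + vz ^+ 2 ->
  Num.min b 1 / (2 * (1 + Num.min b 1)) <= vt ^+ 2.
Proof.
move=> b0 h1 h2; set m := Num.min b 1.
have m0 : 0 < m by rewrite /m lt_min b0 ltr01.
have mb : m <= b by rewrite /m ge_min lexx.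
have m1 : m <= 1 by rewrite /m ge_min lexx orbT.
rewrite ler_pdivrMr; last by rewrite mulr_gt0 //; lra.
have hx := sqr_ge0 vx; have hy := sqr_ge0 vy; have hz := sqr_ge0 vz.
have : m * (vx ^+ 2 + vy ^+ 2) <= b * (vx ^+ 2 + vy ^+ 2) by nra.
have : m * vz ^+ 2 <= vz ^+ 2 by nra.
nra.
Qed.

Lemma arith2 (c A C u w z d1 d2 : R) : 0 < c -> 0 < A -> c * A = `|C| + 1 ->
  `|z| <= C -> w - z = d2 * A -> z - u = d1 * A -> 0 < d1 * d2 ->
  c <= `|d1| -> c <= `|d2| -> u * w <= 0.
Proof.
move=> c0 A0 cA hz e2 e1 p h1 h2.
have := ler_norm C; move: hz; rewrite ler_norml => /andP[hz1 hz2] hC.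
case: (ltP 0 d2) => s2; case: (ltP 0 d1) => s1.
- rewrite gtr0_norm // in h1; rewrite gtr0_norm // in h2.
  have : c * A <= d2 * A by rewrite ler_wpM2r // ltW.
  have : c * A <= d1 * A by rewrite ler_wpM2r // ltW.
  move=> q1 q2.
  have hu : u < 0 by lra.
  have hw : 0 < w by lra.
  nra.
- nra.
- nra.
- rewrite ler0_norm // in h1; rewrite ler0_norm // in h2.
  have : c * A <= - d2 * A by rewrite ler_wpM2r // ltW.
  have : c * A <= - d1 * A by rewrite ler_wpM2r // ltW.
  move=> q1 q2.
  have hu : 0 < u by lra.
  have hw : w < 0 by lra.
  nra.
Qed.

Lemma small_C (C e d : R) : 0 < e -> e <= d -> (`|C| + 1) * d = 1 / 2 ->
  C * e <= 1 / 2.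
Proof.
move=> e0 ed hd; have h1 := ler_norm C; have h2 := normr_ge0 C.
have : C * e <= `|C| * e by rewrite ler_wpM2r // ltW.
have : (`|C| + 1) * e <= (`|C| + 1) * d by rewrite ler_wpM2l //; lra.
lra.
Qed.

Lemma comb1 (a r t p : R) : a <= r -> - t + r <= - p -> 0 < p -> a <= t.
Proof. move=> h1 h2 h3; lra. Qed.

Lemma comb2 (S x : R) : - x <= S - 1 -> x <= 1 / 2 -> 1 / 2 <= S.
Proof. move=> h1 h2; lra. Qed.

End Helpers.
Arguments comb1 {R}.
Arguments comb2 {R}.
Arguments small_C {R}.
Arguments fse_and {R P Q}.
Arguments fse_mono {R P Q}.
Arguments fse_le {R d}.
Arguments mvt_f {R}.
Arguments ivt0 {R}.
Arguments sign_f {R}.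
Arguments dist_f {R}.
Arguments abs_lb {R}.
Arguments key_ineq {R}.
Arguments arith2 {R}.
Arguments sum4 {R}.


Theorem mainTheorem4 (R : realType) (alpha : R) (psi : R -> R -> R -> R)
    (gam : R -> R -> 'I_4 -> R) :
  0 < alpha < 1 ->
  delta_net psi ->
  (exists beta : R, 0 < beta /\
     forall eps x y z v1 v2 v3, 0 < eps <= 1 ->
       beta * (v1 ^+ 2 + v2 ^+ 2) + v3 ^+ 2 <= rho alpha psi eps x y z v1 v2 v3) ->
  c_bounded_curve_rep gam ->
  eucl_unit_speed gam ->
  (exists q : R, 0 <= q /\
     for_small_eps (fun eps => forall s : R,
       g_alpha alpha psi eps (gam eps s) (vel gam eps s) <= - (eps `^ q))) ->
  exists s : R -> R,
    cpt_gen_num s /\ in_S_tilde_c (fun eps => gam eps (s eps)) /\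
    forall s' : R -> R,
      cpt_gen_num s' -> in_S_tilde_c (fun eps => gam eps (s' eps)) ->
      gen_num_eq s' s.
Proof.
move=> _ _ [beta [b0 hb]] [hsm [hmod hcb]] hunit [q [q0 hq]].
set m := Num.min beta 1.
set c := m / (2 * (1 + m)).
have m0 : 0 < m by rewrite /m lt_min b0 ltr01.
have m1 : m <= 1 by rewrite /m ge_min lexx orbT.
have c0 : 0 < c by rewrite divr_gt0 // mulr_gt0 //; lra.
have c1 : c <= 1 by rewrite ler_pdivrMr ?mul1r; [lra | rewrite mulr_gt0 //; lra].
have K : forall a b, for_small_eps (fun eps =>
    forall s, a <= s <= b -> c <= vel gam eps s ct ^+ 2).
  move=> a b; have [C1 hC1] := hunit 0%N a b 1%N.
  set d := 1 / (2 * (`|C1| + 1)).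
  have d0 : 0 < d by rewrite divr_gt0 // mulr_gt0 //; have := normr_ge0 C1; lra.
  have hd : (`|C1| + 1) * d = 1 / 2.
    rewrite /d; field; have := normr_ge0 C1 => ?; rewrite gt_eqF //; lra.
  have HH := fse_and hC1 (fse_and hq (fse_le d0)).
  refine (fse_mono _ HH).
  move=> eps e01 [h1 [h2 h3]] s hs.
  have := h1 s hs; rewrite /= expr1 sum4 => hS.
  have := h2 s; rewrite /g_alpha => hg.
  have := hb eps (gam eps s cx) (gam eps s cy) (gam eps s cz)
    (vel gam eps s cx) (vel gam eps s cy) (vel gam eps s cz) e01 => hr.
  have := @powR_gt0 R eps q; move: e01 => /andP[e0 _] /(_ e0) pq.
  have hC : C1 * eps <= 1 / 2 := small_C _ _ _ e0 h3 hd.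
  move: hS; rewrite ler_norml => /andP[hS _].
  exact: (key_ineq _ _ _ _ _ b0 (comb1 _ _ _ _ hr hg pq) (comb2 _ _ hS hC)).
have c01 : 0 < c <= 1 by rewrite c0 c1.
have [C0 hC0] := hcb 0 0.
set A := (`|C0| + 1) / c.
have A0 : 0 < A by rewrite divr_gt0 //; have := normr_ge0 C0; lra.
have cA : c * A = `|C0| + 1 by rewrite /A mulrC divfK // gt_eqF.
have [CA hCA] := hcb (-A) A.
have E1 : for_small_eps (fun eps =>
    (exists t, -A <= t <= A /\ gam eps t ct = 0) /\
    forall s i, -A <= s <= A -> `|gam eps s i| <= CA).
  refine (fse_mono _ (fse_and hC0 (fse_and (K (-A) A) hCA))).
  move=> eps e01 [h0 [hk hca]]; split => //.
  pose f := fun r => gam eps r ct.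
  have df : forall s, derivable f s 1 := fun s => hsm eps e01 ct 0%N s.
  have ddf : forall s, derivable (derive1 f) s 1 := fun s => hsm eps e01 ct 1%N s.
  have hk' : forall x, -A <= x <= A -> c <= derive1 f x ^+ 2 := hk.
  have [z2 /andP[z21 z22] e2] := mvt_f f 0 A df A0.
  have mA : -A < 0 by rewrite oppr_lt0.
  have [z1 /andP[z11 z12] e1] := mvt_f f (-A) 0 df mA.
  have in1 : -A <= z1 <= A by apply/andP; split; lra.
  have in2 : -A <= z2 <= A by apply/andP; split; lra.
  have p := sign_f f (-A) A c ddf c0 hk' z1 z2 in1 in2.
  have l1 := abs_lb c _ c01 (hk' z1 in1).
  have l2 := abs_lb c _ c01 (hk' z2 in2).
  have hz : `|f 0| <= C0 by apply: h0; rewrite lexx.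
  rewrite subr0 in e2; rewrite sub0r opprK in e1.
  have hp := arith2 c A C0 (f (-A)) (f A) (f 0) (derive1 f z1) (derive1 f z2)
    c0 A0 cA hz e2 e1 p l1 l2.
  have lA : -A <= A by lra.
  have [z hz' fz] := ivt0 f (-A) A df lA hp.
  by exists z.
pose s := fun eps => xget 0 [set t | -A <= t <= A /\ gam eps t ct = 0].
have sP : for_small_eps (fun eps =>
    (-A <= s eps <= A /\ gam eps (s eps) ct = 0) /\
    forall s i, -A <= s <= A -> `|gam eps s i| <= CA).
  refine (fse_mono _ E1) => eps _ [ex hb']; split => //.
  exact: (xgetPex 0 ex).
exists s; split.
  exists A; refine (fse_mono _ sP) => eps _ [[hs _] _].
  by rewrite ler_norml.
split.
  exists (fun eps i => if i == ct then 0 else gam eps (s eps) i); split.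
    by move=> eps _; rewrite eqxx.
  split.
    exists `|CA|; refine (fse_mono _ sP) => eps _ [[hs _] hb'] i.
    case: eqP => _; first by rewrite normr0.
    exact: le_trans (hb' _ _ hs) (ler_norm _).
  move=> i m'; exists 0; refine (fse_mono _ sP) => eps _ [[hs h0'] _].
  case: eqP => [->|_]; last by rewrite subrr normr0 mul0r.
  by rewrite subr0 h0' normr0 mul0r.
move=> s' [C' hC'] [p [hp0 [_ hpeq]]] m'.
have [Kc hK] := hpeq ct m'.
pose B := A + `|C'|.
exists (Kc / c).
refine (fse_mono _ (fse_and sP (fse_and hC' (fse_and hK (K (-B) B))))).
move=> eps e01 [[[hs hs0] _] [h1 [h2 h3]]].
pose f := fun r => gam eps r ct.
have df : forall s, derivable f s 1 := fun s => hsm eps e01 ct 0%N s.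
have hl : forall z, -B <= z <= B -> c <= `|derive1 f z|.
  by move=> z hz; apply: abs_lb c01 (h3 z hz).
have hC'' := ler_norm C'.
have hC3 := normr_ge0 C'.
have in1 : -B <= s' eps <= B.
  by move: h1; rewrite ler_norml => /andP[? ?]; apply/andP; rewrite /B; split; lra.
have in2 : -B <= s eps <= B.
  by move: hs => /andP[? ?]; apply/andP; rewrite /B; split; lra.
have := dist_f f (-B) B c (s' eps) (s eps) df (ltW c0) hl in1 in2.
rewrite /f hs0 subr0 => hd.
rewrite hp0 // subr0 in h2.
rewrite mulrAC ler_pdivlMr // mulrC.
exact: le_trans hd h2.
Qed.
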